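(* Let $\boldsymbol{A}\in\mathsf{PSL}$ be finite. Then $\boldsymbol{A}^+$ is the $\langle\land,\lnot,0,1\rangle$-reduct of a Heyting algebra, $\boldsymbol{A}^+\in\mathsf{PSL}$, and the map $\epsilon_{\boldsymbol{A}}\colon\boldsymbol{A}\to\boldsymbol{A}^+$ is an embedding.
   Context: $\mathsf{PSL}$ is the class of pseudocomplemented semilattices $\langle A;\land,\lnot,0,1\rangle$: $\langle A;\land\rangle$ is a semilattice (order $a\le b$ iff $a\land b=a$) with minimum $0$ and maximum $1$, and $c\land a=0\iff c\le\lnot a$. An element $a$ of a semilattice is join irreducible if it is not the minimum and, whenever $a=b\lor c$ for some $b,c$ whose join exists, $a=b$ or $a=c$; $\mathsf{J}(\boldsymbol{A})$ is the subposet of join irreducible elements. For finite $\boldsymbol{A}$, $\boldsymbol{A}^+=\langle\mathsf{Dw}(\mathsf{J}(\boldsymbol{A}));\cap,\lnot,\emptyset,\mathsf{J}(\boldsymbol{A})\rangle$, where $\mathsf{Dw}(\mathsf{J}(\boldsymbol{A}))$ is the set of downsets of $\mathsf{J}(\boldsymbol{A})$ and $\lnot D=\{a\in\mathsf{J}(\boldsymbol{A}): D\cap{\downarrow}a=\emptyset\}$; and $\epsilon_{\boldsymbol{A}}(a)=\mathsf{J}(\boldsymbol{A})\cap{\downarrow}a$. *)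

(* Defs.v *)
From mathcomp Require Import all_boot.
Set Implicit Arguments. Unset Strict Implicit. Unset Printing Implicit Defensive.

Definition le_of (X : Type) (meet : X -> X -> X) (a b : X) : Prop := meet a b = a.

Definition is_psl_on (X : Type) (P : X -> Prop)
  (meet : X -> X -> X) (neg : X -> X) (zero one : X) : Prop :=
  [/\ P zero /\ P one,
      (forall a b, P a -> P b -> P (meet a b)) /\ (forall a, P a -> P (neg a)),
      (forall a b c, P a -> P b -> P c -> meet a (meet b c) = meet (meet a b) c)
      /\ (forall a b, P a -> P b -> meet a b = meet b a)
      /\ (forall a, P a -> meet a a = a),
      (forall a, P a -> le_of meet zero a /\ le_of meet a one) &
      (forall a c, P a -> P c -> (meet c a = zero <-> le_of meet c (neg a)))].

Definition is_heyting_on (X : Type) (P : X -> Prop)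
  (meet join imp : X -> X -> X) (bot top : X) : Prop :=
  [/\ P bot /\ P top,
      (forall a b, P a -> P b -> [/\ P (meet a b), P (join a b) & P (imp a b)]),
      (forall a b c, P a -> P b -> P c ->
          meet a (meet b c) = meet (meet a b) c /\ join a (join b c) = join (join a b) c)
      /\ (forall a b, P a -> P b -> meet a b = meet b a /\ join a b = join b a)
      /\ (forall a b, P a -> P b -> meet a (join a b) = a /\ join a (meet a b) = a),
      (forall a, P a -> meet bot a = bot /\ meet a top = a) &
      (forall a b c, P a -> P b -> P c ->
          (le_of meet (meet a b) c <-> le_of meet a (imp b c)))].

Section Plus.
Variables (T : finType) (meet : T -> T -> T) (zero : T).

Definition leb (a b : T) : bool := meet a b == a.

Definition is_joinb (x b c : T) : bool :=
  [&& leb b x, leb c x & [forall u, leb b u ==> leb c u ==> leb x u]].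

Definition join_irrb (a : T) : bool :=
  (a != zero) &&
  [forall b, forall c, is_joinb a b c ==> (a == b) || (a == c)].

Definition Jirr : {set T} := [set a | join_irrb a].

Definition downset (D : {set T}) : bool :=
  (D \subset Jirr) &&
  [forall a in D, forall b in Jirr, leb b a ==> (b \in D)].

Definition plus_neg (D : {set T}) : {set T} :=
  [set a in Jirr | [forall b in D, ~~ leb b a]].

Definition eps (a : T) : {set T} := [set b in Jirr | leb b a].

End Plus.

(* Main.v *)
Require Import Defs.
From mathcomp Require Import all_boot.

Lemma leb_refl (T : finType) (meet : T -> T -> T) (mI : forall a, meet a a = a) a :
  leb meet a a.
Proof. by rewrite /leb mI. Qed.

Lemma leb_trans (T : finType) (meet : T -> T -> T)
  (mA : forall a b c, meet a (meet b c) = meet (meet a b) c) a b c :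
  leb meet a b -> leb meet b c -> leb meet a c.
Proof.
rewrite /leb => /eqP h1 /eqP h2; apply/eqP.
by rewrite -{1}h1 -mA h2 h1.
Qed.

Lemma leb_anti (T : finType) (meet : T -> T -> T)
  (mC : forall a b, meet a b = meet b a) a b :
  leb meet a b -> leb meet b a -> a = b.
Proof. by rewrite /leb => /eqP h1 /eqP h2; rewrite -h1 mC h2. Qed.

Lemma leb_meet (T : finType) (meet : T -> T -> T)
  (mA : forall a b c, meet a (meet b c) = meet (meet a b) c)
  (mC : forall a b, meet a b = meet b a)
  (mI : forall a, meet a a = a) c a b :
  leb meet c (meet a b) = leb meet c a && leb meet c b.
Proof.
rewrite /leb; apply/eqP/andP.
  move=> h; split; apply/eqP.
    by rewrite -h -mA [meet a b]mC -mA mI.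
  by rewrite -h -mA -mA mI.
by case=> /eqP h1 /eqP h2; rewrite mA h1 h2.
Qed.

Lemma exJ (T : finType) (meet : T -> T -> T) (zero : T)
  (mA : forall a b c, meet a (meet b c) = meet (meet a b) c)
  (mC : forall a b, meet a b = meet b a)
  (mI : forall a, meet a a = a)
  (z0 : forall a, meet zero a = zero) (y : T) :
  forall x, ~~ leb meet x y ->
  exists2 c, c \in Jirr meet zero & leb meet c x && ~~ leb meet c y.
Proof.
move=> x.
have [n hn] : exists n, #|[set z | leb meet z x]| <= n by exists #|[set z | leb meet z x]|.
elim: n x hn => [|n IH] x hn hxy.
  have : 0 < #|[set z | leb meet z x]|.
    by apply/card_gt0P; exists x; rewrite inE leb_refl.
  by rewrite (leq_gtF hn).
case hJ: (x \in Jirr meet zero).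
  by exists x => //; rewrite leb_refl.
move: hJ; rewrite inE /join_irrb.
case: eqP => [hx0 _|_ /=].
  by move: hxy; rewrite hx0 /leb z0 eqxx.
move/negbT; rewrite negb_forall => /existsP [b]; rewrite negb_forall => /existsP [c].
rewrite negb_imply negb_or => /andP [hj /andP [nb nc]].
move: (hj); rewrite /is_joinb => /and3P [hb hc /forallP hu].
have strict : forall d, leb meet d x -> x != d ->
    #|[set z | leb meet z d]| <= n.
  move=> d hd nd; rewrite -ltnS; apply: leq_trans hn.
  apply: proper_card; apply/properP; split.
    apply/subsetP => z; rewrite !inE => hz; exact: leb_trans hz hd.
  exists x; first by rewrite inE leb_refl.
  rewrite inE; apply/negP => hxd; move/negP: nd; apply; apply/eqP.
  exact: leb_anti.
case hby: (leb meet b y); last first.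
  have [c' hc' /andP [h1 h2]] := IH b (strict b hb nb) (negbT hby).
  by exists c' => //; rewrite h2 (@leb_trans _ _ mA _ _ _ h1 hb).
case hcy: (leb meet c y); last first.
  have [c' hc' /andP [h1 h2]] := IH c (strict c hc nc) (negbT hcy).
  by exists c' => //; rewrite h2 (@leb_trans _ _ mA _ _ _ h1 hc).
by move: (hu y); rewrite hby hcy /= (negbTE hxy).
Qed.

Lemma downsetP (T : finType) (meet : T -> T -> T) (zero : T) (D : {set T}) :
  reflect (D \subset Jirr meet zero /\
           forall a b, a \in D -> b \in Jirr meet zero -> leb meet b a -> b \in D)
          (downset meet zero D).
Proof.
apply: (iffP andP) => [[h1 /forallP h2]|[h1 h2]]; split => //.
  move=> a b ha hb hba; move: (h2 a); rewrite ha /= => /forallP /(_ b).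
  by rewrite hb hba.
apply/forallP => a; apply/implyP => ha; apply/forallP => b; apply/implyP => hb.
by apply/implyP; apply: h2.
Qed.

Theorem lemma5p8 (T : finType) (meet : T -> T -> T) (neg : T -> T) (zero one : T) :
  is_psl_on (fun _ : T => True) meet neg zero one ->
  (* A^+ is the <meet, neg, 0, 1>-reduct of a Heyting algebra *)
  (exists (join imp : {set T} -> {set T} -> {set T}),
      is_heyting_on (fun D => downset meet zero D) (@setI T) join imp set0 (Jirr meet zero)
      /\ (forall D, downset meet zero D -> plus_neg meet zero D = imp D set0))
  (* A^+ is in PSL *)
  /\ is_psl_on (fun D => downset meet zero D) (@setI T) (plus_neg meet zero) set0 (Jirr meet zero)
  (* epsilon_A : A -> A^+ is an embedding *)
  /\ [/\ (forall a, downset meet zero (eps meet zero a)) /\ injective (eps meet zero),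
         (forall a b, eps meet zero (meet a b) = eps meet zero a :&: eps meet zero b),
         (forall a, eps meet zero (neg a) = plus_neg meet zero (eps meet zero a)),
         eps meet zero zero = set0 &
         eps meet zero one = Jirr meet zero].
Proof.
move=> [_ _ [mA' [mC' mI']] hbd hpc'].
have mA : forall a b c, meet a (meet b c) = meet (meet a b) c by move=> *; apply: mA'.
have mC : forall a b, meet a b = meet b a by move=> *; apply: mC'.
have mI : forall a, meet a a = a by move=> *; apply: mI'.
have hpc : forall a c, meet c a = zero <-> le_of meet c (neg a) by move=> *; apply: hpc'.
have z0 : forall a, meet zero a = zero by move=> a; case: (hbd a I).
have o1 : forall a, meet a one = a by move=> a; case: (hbd a I).
set J := Jirr meet zero.
have lrefl := @leb_refl T meet mI.
have ltrans := @leb_trans T meet mA.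
have lanti := @leb_anti T meet mC.
have lmeet := @leb_meet T meet mA mC mI.
have Jnz : forall c, c \in J -> c != zero by move=> c; rewrite inE => /andP [].
have le0 : forall c, leb meet c zero -> c = zero.
  by move=> c h; apply: lanti h _; rewrite /leb z0.
have sub_eps : forall a b, eps meet zero a \subset eps meet zero b -> leb meet a b.
  move=> a b hs; apply/negPn/negP => hab.
  have [c hc /andP [h1 h2]] := @exJ T meet zero mA mC mI z0 b a hab.
  have : c \in eps meet zero a by rewrite inE hc h1.
  by move/(subsetP hs); rewrite inE (negbTE h2) andbF.
have dJ : downset meet zero J.
  by apply/downsetP; split => // a b _ hb _.
have d0 : downset meet zero set0.
  by apply/downsetP; split; [apply: sub0set | move=> a b; rewrite inE].
have dI : forall D E, downset meet zero D -> downset meet zero E -> downset meet zero (D :&: E).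
  move=> D E /downsetP [hD1 hD2] /downsetP [hE1 hE2]; apply/downsetP; split.
    by apply: subset_trans hD1; apply: subsetIl.
  move=> a b; rewrite !in_setI => /andP [h1 h2] hb hba.
  by rewrite (hD2 a b h1 hb hba) (hE2 a b h2 hb hba).
have dU : forall D E, downset meet zero D -> downset meet zero E -> downset meet zero (D :|: E).
  move=> D E /downsetP [hD1 hD2] /downsetP [hE1 hE2]; apply/downsetP; split.
    by rewrite subUset hD1 hE1.
  move=> a b; rewrite !in_setU => /orP [h|h] hb hba.
    by rewrite (hD2 a b h hb hba).
  by rewrite (hE2 a b h hb hba) orbT.
have dN : forall D, downset meet zero (plus_neg meet zero D).
  move=> D; apply/downsetP; split.
    by apply/subsetP => a; rewrite inE => /andP [].
  move=> a b; rewrite !inE => /andP [ha /forallP h] hb hba; rewrite hb /=.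
  apply/forallP => c; apply/implyP => hc; apply/negP => hcb.
  by move: (h c); rewrite hc /= (ltrans _ _ _ hcb hba).
pose imp (D E : {set T}) := [set a in J | [forall b in J, leb meet b a ==> (b \in D) ==> (b \in E)]].
have dimp : forall D E, downset meet zero (imp D E).
  move=> D E; apply/downsetP; split.
    by apply/subsetP => a; rewrite inE => /andP [].
  move=> a b; rewrite !inE => /andP [ha /forallP h] hb hba; rewrite hb /=.
  apply/forallP => c; apply/implyP => hc; apply/implyP => hcb.
  by move: (h c); rewrite hc (ltrans _ _ _ hcb hba).
have dsub : forall D, downset meet zero D -> D \subset J by move=> D /downsetP [].
have ed : forall a, downset meet zero (eps meet zero a).
  move=> a; apply/downsetP; split.
    by apply/subsetP => x; rewrite inE => /andP [].
  move=> x y; rewrite !inE => /andP [_ h] -> hyx /=; exact: ltrans hyx h.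
split.
  exists (@setU T), imp; split.
    split.
    - by [].
    - by move=> D E hD hE; split; [apply: dI | apply: dU | apply: dimp].
    - split; first by move=> *; rewrite setIA setUA.
      split; first by move=> *; rewrite setIC setUC.
      by move=> D E *; split; apply/setP => x; rewrite !inE; case: (x \in D); case: (x \in E).
    - by move=> D hD; rewrite set0I; split => //; apply/setIidPl; apply: dsub.
    move=> D E F hD hE hF; rewrite /le_of -!/(_ \subset _).
    rewrite /le_of; split => [/setIidPl hs | /setIidPl hs]; apply/setIidPl.
      apply/subsetP => a ha; rewrite /imp inE (subsetP (dsub D hD) a ha) /=.
      apply/forallP => b; apply/implyP => hb; apply/implyP => hba; apply/implyP => hbE.
      apply: (subsetP hs); rewrite in_setI hbE andbT.
      by case/downsetP: hD => _ h; apply: (h a).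
    apply/subsetP => a; rewrite in_setI => /andP [ha hae].
    have := subsetP hs a ha; rewrite /imp inE => /andP [_ /forallP /(_ a)].
    by rewrite (subsetP (dsub D hD) a ha) lrefl hae.
  move=> D hD; apply/setP => a; rewrite /imp /plus_neg !in_set; apply: andb_id2l => _.
  apply/forallP/forallP => h b.
    apply/implyP => hbJ; apply/implyP => hba; apply/implyP => hbD.
    by move: (h b); rewrite hbD hba.
  apply/implyP => hbD; have hbJ := subsetP (dsub D hD) b hbD.
  by move: (h b); rewrite hbJ hbD in_set0; case: leb.
split.
  split.
  - by [].
  - by split => D *; [apply: dI | apply: dN].
  - split; first by move=> *; rewrite setIA.
    split; first by move=> *; rewrite setIC.
    by move=> *; rewrite setIid.
  - by move=> D hD; split; [rewrite /le_of set0I | apply/setIidPl; apply: dsub].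
  move=> A C hA hC; split => [h | /setIidPl hs].
    apply/setIidPl/subsetP => c hc; rewrite /plus_neg in_set (subsetP (dsub C hC) c hc) /=.
    apply/forallP => b; apply/implyP => hbA; apply/negP => hbc.
    have : b \in C :&: A.
      rewrite in_setI hbA andbT.
      by case/downsetP: hC => _ hC2; apply: (hC2 c) => //; apply: (subsetP (dsub A hA)).
    by rewrite h in_set0.
  apply/setP => c; rewrite in_setI in_set0; apply/andP => -[hc ha].
  have := subsetP hs c hc; rewrite /plus_neg in_set => /andP [_ /forallP /(_ c)].
  by rewrite ha lrefl.
split.
- split; [exact: ed | move=> a b h; apply: lanti; apply: sub_eps; rewrite h subxx //].
- move=> a b; apply/setP => c; rewrite /eps in_setI !in_set lmeet.
  by case: (join_irrb meet zero c).
- move=> a; apply/setP => c; rewrite /eps /plus_neg !in_set; apply: andb_id2l => hcJ.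
  apply/idP/forallP.
    move=> h b; rewrite in_set; apply/implyP => /andP [hbJ hba]; apply/negP => hbc.
    have hm : meet c a = zero by apply/hpc; apply/eqP.
    have : leb meet b (meet c a) by rewrite lmeet hbc hba.
    by rewrite hm => /le0 hb0; move: (Jnz b hbJ); rewrite hb0 eqxx.
  move=> h; apply/eqP; apply/hpc; apply: le0; apply: sub_eps.
  apply/subsetP => b; rewrite /eps !in_set => /andP [hbJ hbm].
  rewrite lmeet in hbm; case/andP: hbm => hbc hba.
  by move: (h b); rewrite !in_set hbJ hba hbc.
- apply/setP => c; rewrite /eps in_set in_set0; apply/andP => -[hcJ hc0].
  by move: (Jnz c hcJ); rewrite (le0 c hc0) eqxx.
apply/setP => c; rewrite /eps in_set /leb o1 eqxx andbT //.
Qed.
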